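(* Let $(\mathcal{X},\rho)$ be a bounded length space with finite doubling dimension $d$ and diameter $R$, equipped with a finite Borel measure $\nu$. For $\eta\in\mathcal{F}_0$, let $\mathfrak{b}$ be the box-counting dimension of $\partial_\eta\mathcal{X}$. Then for any $c>0$ there exists a constant $C>0$ such that for all $r>0$, \[\mathcal{N}_{\mathrm{ML},\eta}\big(\mathcal{X}\setminus(\partial_\eta\mathcal{X})^r\big)\le C R^{4d} r^{-(\mathfrak{b}+c)}.\]
   Context: A length space: $\rho(x,x')=\inf_\gamma\ell(\gamma)$ over continuous paths from $x$ to $x'$. Doubling dimension $d$: every open ball $B(x,r)$ can be covered by $2^d$ balls of radius $r/2$. $\mathrm{margin}_\eta(x)=\inf\{\rho(x,x'):\eta(x')\ne\eta(x)\}$; $\partial_\eta\mathcal{X}=\{x:\mathrm{margin}_\eta(x)=0\}$; $\mathcal{F}_0$ = measurable $\eta$ with $\nu(\partial_\eta\mathcal{X})=0$. $A^r=\bigcup_{x\in A}B(x,r)$. A set $U$ is mutually-labeling for $\eta$ if $\sup_{z,z'\in U}\rho(z,z')<\mathrm{margin}_\eta(x)$ for all $x\in U$; $\mathcal{N}_{\mathrm{ML},\eta}(V)$ is the minimal number of mutually-labeling sets covering $V$. $\mathcal{N}_r(A)$ is the minimal number of radius-$r$ balls covering $A$, and the box-counting dimension is $\mathfrak{b}(A)=\limsup_{r\to0}\log\mathcal{N}_r(A)/\log(1/r)$. *)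

(* Defs.v *)
From HB Require Import structures.
From mathcomp Require Import all_boot all_order all_algebra.
From mathcomp Require Import all_classical all_reals all_analysis.
Set Implicit Arguments. Unset Strict Implicit. Unset Printing Implicit Defensive.
Import Order.TTheory GRing.Theory Num.Theory.
Local Open Scope classical_set_scope.
Local Open Scope ring_scope.

Section Defs.
Variables (R : realType) (X : pointedType) (rho : X -> X -> R).

Definition is_metric : Prop :=
  [/\ (forall x y, 0 <= rho x y),
      (forall x y, rho x y = 0 <-> x = y),
      (forall x y, rho x y = rho y x) &
      (forall x y z, rho x z <= rho x y + rho y z)].

Definition oball (x : X) (r : R) : set X := [set y | rho x y < r].

Definition enlarge (A : set X) (r : R) : set X :=
  \bigcup_(x in A) oball x r.

(* open sets of the metric topology; Borel sets = sigma-algebra they generate *)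
Definition rho_open (A : set X) : Prop :=
  forall x, A x -> exists e : R, 0 < e /\ oball x e `<=` A.
Definition rho_open_sets : set (set X) := [set A | rho_open A].

Definition is_path (gamma : R -> X) : Prop :=
  forall t, 0 <= t <= 1 -> forall e : R, 0 < e -> exists2 del : R, 0 < del &
    forall s, 0 <= s <= 1 -> `|s - t| < del -> rho (gamma s) (gamma t) < e.

Definition is_partition (s : seq R) : Prop :=
  [/\ (1 < size s)%N, head 0 s = 0, last 0 s = 1 & sorted <=%R s].

Definition path_sum (gamma : R -> X) (s : seq R) : R :=
  \sum_(i < (size s).-1) rho (gamma (nth 0 s i)) (gamma (nth 0 s i.+1)).

Definition path_length (gamma : R -> X) : \bar R :=
  ereal_sup [set (path_sum gamma s)%:E | s in is_partition].

Definition length_space : Prop :=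
  forall x x', ((rho x x')%:E = ereal_inf
    [set path_length gamma | gamma in
       [set g | is_path g /\ g 0%R = x /\ g 1%R = x']])%E.

Definition doubling (d : R) : Prop :=
  forall (x : X) (r : R), 0 < r -> exists s : seq X,
    (size s)%:R <= 2 `^ d /\ oball x r `<=` \bigcup_(z in [set` s]) oball z (r / 2).

Definition diameter : \bar R :=
  ereal_sup [set (rho p.1 p.2)%:E | p in [set: X * X]].

Section Label.
Variables (Y : Type) (eta : X -> Y).

Definition margin (x : X) : \bar R :=
  ereal_inf [set (rho x x')%:E | x' in [set x' | eta x' <> eta x]].

Definition boundary : set X := [set x | margin x = 0%E].

Definition mutually_labeling (U : set X) : Prop :=
  forall x, U x ->
    (ereal_sup [set (rho p.1 p.2)%:E | p in [set p : X * X | U p.1 /\ U p.2]]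
       < margin x)%E.

(* minimal number of mutually-labeling sets covering V (+oo if none) *)
Definition N_ML (V : set X) : \bar R :=
  ereal_inf [set (n%:R)%:E | n in [set n : nat | exists U : nat -> set X,
     (forall i, (i < n)%N -> mutually_labeling (U i)) /\
     V `<=` \bigcup_(i in [set i | (i < n)%N]) U i]].
End Label.

(* minimal number of radius-r balls covering A (+oo if none) *)
Definition N_r (A : set X) (r : R) : \bar R :=
  ereal_inf [set (n%:R)%:E | n in [set n : nat | exists s : seq X,
     size s = n /\ A `<=` \bigcup_(z in [set` s]) oball z r]].

Definition box_ratio (A : set X) (r : R) : \bar R :=
  match N_r A r with
  | EFin n => (ln n / ln (r^-1))%:E
  | e => e
  end.

(* box-counting dimension: limsup_{r -> 0+} log N_r(A) / log (1/r),
   written out as inf_{delta > 0} sup_{0 < r < delta} *)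
Definition box_dim (A : set X) : \bar R :=
  ereal_inf [set ereal_sup [set box_ratio A r | r in [set r | 0 < r < del]]
            | del in [set del : R | 0 < del]].
End Defs.

(* Main.v *)
Require Import Defs.
From HB Require Import structures.
From mathcomp Require Import all_boot all_order all_algebra.
From mathcomp Require Import all_classical all_reals all_analysis.
From mathcomp Require Import ring lra.
Import Order.TTheory GRing.Theory Num.Theory.
Local Open Scope classical_set_scope.
Local Open Scope ring_scope.

Section Helpers.
Variables (R : realType) (X : pointedType) (rho : X -> X -> R).
Hypothesis hm : is_metric rho.

Lemma rho_ge0 x y : 0 <= rho x y. Proof. by case: hm. Qed.
Lemma rho_sym x y : rho x y = rho y x. Proof. by case: hm. Qed.
Lemma rho_tri x y z : rho x z <= rho x y + rho y z. Proof. by case: hm. Qed.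
Lemma rho_xx x : rho x x = 0. Proof. by case: hm => _ h _ _; apply/h. Qed.

Lemma path_le (g : R -> X) t : 0 <= t <= 1 ->
  ((rho (g 0) (g t))%:E <= path_length rho g)%E.
Proof.
move=> /andP[t0 t1].
apply: (@le_trans _ _ (path_sum rho g [:: 0; t; 1])%:E); last first.
  apply: ereal_sup_ubound; exists [:: 0; t; 1] => //.
  by split => //=; rewrite t0 t1.
rewrite lee_fin /path_sum /= !big_ord_recr big_ord0 /= add0r.
by rewrite lerDl rho_ge0.
Qed.

Lemma ereal_le0 (v : \bar R) : (forall e : R, 0 < e -> (v <= e%:E)%E) -> (v <= 0)%E.
Proof.
case: v => [v| |] H //; last by have := H 1 ltr01.
rewrite lee_fin; apply/ler_addgt0Pr => e e0; rewrite add0r.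
by have := H e e0; rewrite lee_fin.
Qed.

Lemma bnd_near (hl : length_space rho) (Y : Type) (eta : X -> Y) x x' e :
  eta x' <> eta x -> 0 < e -> exists z, boundary rho eta z /\ rho x z < rho x x' + e.
Proof.
move=> neq e0.
have := hl x x'; set S := (X in ereal_inf X); move=> hL.
have : (ereal_inf S < (rho x x' + e)%:E)%E by rewrite -hL lte_fin ltrDl.
case/ereal_inf_lt => _ [g [gp [g0 g1]] <-] hlt.
pose T := [set t : R | 0 <= t <= 1 /\ forall s, 0 <= s <= t -> eta (g s) = eta x].
have T0 : T 0.
  split; first by rewrite lexx ler01.
  move=> s /andP[s0 s0']; have -> : s = 0 by apply/le_anti; rewrite s0 s0'.
  by rewrite g0.
have hsT : has_sup T by split; [exists 0 | exists 1 => t [/andP[_ ?] _]].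
set ts := sup T.
have ts0 : 0 <= ts := sup_upper_bound hsT T0.
have ts1 : ts <= 1 by apply: ge_sup; [exists 0 | move=> t [/andP[_ ?] _]].
have A : forall s, 0 <= s < ts -> eta (g s) = eta x.
  move=> s /andP[s0 sts].
  have hp : 0 < ts - s by rewrite subr_gt0.
  have [t [_ Tt] hts] := sup_adherent hp hsT.
  apply: Tt; rewrite s0 /=; move: hts; rewrite -/ts; lra.
exists (g ts); split; last first.
  rewrite -lte_fin; apply: le_lt_trans hlt; rewrite -g0; apply: path_le.
  by rewrite ts0 ts1.
have key : forall e', 0 < e' -> exists y, eta y <> eta (g ts) /\ rho (g ts) y < e'.
  move=> e' e'0.
  have ts01 : 0 <= ts <= 1 by rewrite ts0 ts1.
  have [del del0 hdel] := gp ts ts01 e' e'0.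
  have [E|E] := boolp.pselect (eta (g ts) = eta x).
    have ts1' : ts < 1.
      rewrite lt_neqAle ts1 andbT; apply/eqP => h.
      by apply: neq; rewrite -g1 -h.
    have : exists u, (0 <= u <= 1) /\ `|u - ts| < del /\ eta (g u) <> eta x.
      apply: boolp.contrapT => N.
      pose t' := Num.min (ts + del / 2) 1.
      have t'0 : 0 <= t' by rewrite le_min; apply/andP; split; lra.
      have t'1 : t' <= 1 by rewrite ge_min lexx orbT.
      have tst' : ts < t' by rewrite lt_min ts1' andbT; lra.
      have Tt' : T t'.
        split; first by rewrite t'0 t'1.
        move=> s /andP[s0 st'].
        case: (ltgtP s ts) => [slt|sgt|->] //; first by apply: A; rewrite s0 slt.
        apply: boolp.contrapT => Ns; apply: N; exists s; split.
          by rewrite s0 /=; apply: le_trans st' t'1.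
        split => //.
        have : s <= ts + del / 2 by apply: le_trans st' _; rewrite ge_min lexx.
        by rewrite ltr_norml; lra.
      have := sup_upper_bound hsT Tt'; rewrite -/ts; lra.
    case=> u [u01 [ud ne]]; exists (g u); split; first by rewrite E.
    by rewrite rho_sym; apply: hdel.
  have tsp : 0 < ts.
    rewrite lt_neqAle ts0 andbT; apply/eqP => h; apply: E.
    by rewrite -h g0.
  pose u := Num.max 0 (ts - del / 2).
  have u0 : 0 <= u by rewrite le_max lexx.
  have uts : u < ts by rewrite gt_max tsp /=; lra.
  have ud : `|u - ts| < del.
    have : ts - del / 2 <= u by rewrite le_max lexx orbT.
    by rewrite ltr_norml; lra.
  exists (g u); split.
    by rewrite A ?u0 ?uts // => h; apply: E; rewrite h.
  rewrite rho_sym; apply: hdel => //; rewrite u0 /=; lra.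
rewrite /boundary /margin /=; apply/le_anti/andP; split; last first.
  by apply: le_ereal_inf_tmp => _ [y _ <-]; rewrite lee_fin rho_ge0.
apply: ereal_le0 => e' e'0; have [y [ny hy]] := key e' e'0.
apply: (@le_trans _ _ (rho (g ts) y)%:E); first by apply: ereal_inf_lbound; exists y.
by rewrite lee_fin ltW.
Qed.

Lemma margin_ge (hl : length_space rho) (Y : Type) (eta : X -> Y) x s :
  (forall z, boundary rho eta z -> s <= rho z x) -> (s%:E <= margin rho eta x)%E.
Proof.
move=> H; apply: le_ereal_inf_tmp => _ [x' nx' <-]; rewrite lee_fin.
apply/ler_addgt0Pr => e e0; have [z [bz hz]] := @bnd_near hl Y eta x x' e nx' e0.
by rewrite (le_trans (H z bz)) // rho_sym ltW.
Qed.

Definition Uset (Y : Type) (eta : X -> Y) (w : X) (s : R) : set X :=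
  [set x | rho w x < s / 4 /\ forall z, boundary rho eta z -> s <= rho z x].

Lemma ml_U (hl : length_space rho) (Y : Type) (eta : X -> Y) w s :
  mutually_labeling rho eta (@Uset Y eta w s).
Proof.
move=> x [hx hb].
have s0 : 0 < s by have := rho_ge0 w x; lra.
apply: (@le_lt_trans _ _ (s / 2)%:E); last first.
  apply: (lt_le_trans _ (@margin_ge hl Y eta x s hb)); rewrite lte_fin; lra.
apply: ge_ereal_sup => _ [[p1 p2] [[h1 _] [h2 _]] <-] /=.
rewrite lee_fin; apply: le_trans (rho_tri p1 w p2) _.
by rewrite rho_sym; lra.
Qed.

Lemma size_flatten_le (T U : Type) (f : T -> seq U) (sq : seq T) (M : R) :
  (forall z, (size (f z))%:R <= M) ->
  (size (flatten (map f sq)))%:R <= (size sq)%:R * M.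
Proof.
move=> H; elim: sq => [|z sq IH] /=; first by rewrite mul0r.
by rewrite size_cat natrD -addn1 natrD mulrDl mul1r addrC lerD.
Qed.

Lemma dbl_iter d (hd : doubling rho d) n x r0 : 0 < r0 ->
  exists sq : seq X, (size sq)%:R <= (2 `^ d) ^+ n /\
    oball rho x r0 `<=` \bigcup_(z in [set` sq]) oball rho z (r0 / 2 ^+ n).
Proof.
move=> r00; elim: n => [|n [sq [hs hc]]].
  exists [:: x]; split; first by rewrite expr0.
  by move=> y hy; exists x; [rewrite /= mem_head | rewrite expr0 divr1].
have hp : 0 < r0 / 2 ^+ n by rewrite divr_gt0 // exprn_gt0.
have [f hf] := boolp.choice (fun z => hd z _ hp).
exists (flatten (map f sq)); split.
  apply: le_trans (@size_flatten_le _ _ f sq (2 `^ d) (fun z => (hf z).1)) _.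
  by rewrite exprSr ler_wpM2r // powR_ge0.
move=> y /hc [z zs hz].
have [w ws hw] := (hf z).2 y hz.
exists w; first by apply/flattenP; exists (f z) => //; apply: map_f.
by move: hw; rewrite /oball /= exprSr invfM mulrA.
Qed.

Lemma box_cover (A : set X) b c : box_dim rho A = b%:E -> 0 < c ->
  exists s0, 0 < s0 /\ s0 <= 1 /\ forall s, 0 < s < s0 ->
    exists sq : seq X, (size sq)%:R < s `^ (-(b+c)) /\
      A `<=` \bigcup_(z in [set` sq]) oball rho z s.
Proof.
move=> hb c0.
have : (box_dim rho A < (b+c)%:E)%E by rewrite hb lte_fin ltrDl.
case/ereal_inf_lt => _ [del del0 <-] hlt.
exists (Num.min del 1); split; first by rewrite lt_min del0 ltr01.
split; first by rewrite ge_min lexx orbT.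
move=> s /andP[s0]; rewrite lt_min => /andP[sdel s1].
have hr : (box_ratio rho A s < (b+c)%:E)%E.
  by apply: le_lt_trans hlt; apply: ereal_sup_ubound; exists s => //; apply/andP; split.
have N0 : (0 <= N_r rho A s)%E.
  by apply: le_ereal_inf_tmp => _ [n _ <-]; rewrite lee_fin ler0n.
suff : (N_r rho A s < (s `^ (-(b+c)))%:E)%E.
  case/ereal_inf_lt => _ [n [sq [<- hc]] <-]; rewrite lte_fin => hn.
  by exists sq.
move: hr N0; rewrite /box_ratio; case: (N_r rho A s) => [v| |] //= hr _.
rewrite lte_fin in hr; rewrite lte_fin.
have ln0 : 0 < ln s^-1 by apply: ln_gt0; rewrite invf_gt1.
case: (lerP v 0) => hv; first by apply: le_lt_trans hv (powR_gt0 _ _).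
rewrite -ltr_ln ?posrE ?powR_gt0 // ln_powR.
rewrite ltr_pdivrMr // in hr.
rewrite lnV ?posrE // in hr; rewrite mulNr -mulrN; exact: hr.
Qed.
End Helpers.

Lemma find_level (P : nat -> Prop) K : P 0%N -> ~ P K ->
  exists k, (k < K)%N /\ P k /\ ~ P k.+1.
Proof.
move=> P0; elim: K => [|K IH] nPK; first by [].
have [PK|nPK'] := boolp.pselect (P K); first by exists K.
by have [k [kK hk]] := IH nPK'; exists k; split => //; apply: ltnW.
Qed.

Lemma size_flatten_eq (R : realType) (T U : Type) (f : T -> seq U) (sq : seq T) :
  (size (flatten (map f sq)))%:R = \sum_(z <- sq) (size (f z))%:R :> R.
Proof.
elim: sq => [|z sq IH] /=; first by rewrite big_nil.
by rewrite big_cons size_cat natrD IH.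
Qed.

Theorem proposition4 (R : realType) (X : pointedType) (rho : X -> X -> R)
  (d diam : R)
  (nu : {finite_measure set (g_sigma_algebraType (rho_open_sets rho)) -> \bar R})
  (dY : measure_display) (Y : measurableType dY)
  (eta : g_sigma_algebraType (rho_open_sets rho) -> Y) (b : R) :
  is_metric rho ->
  length_space rho ->
  doubling rho d ->
  diameter rho = diam%:E ->
  measurable_fun setT eta ->
  nu (boundary rho eta) = 0%E ->
  boundary rho eta !=set0 ->
  box_dim rho (boundary rho eta) = b%:E ->
  forall c : R, 0 < c -> exists C : R, 0 < C /\
    forall r : R, 0 < r ->
      (N_ML rho eta (~` enlarge rho (boundary rho eta) r)
         <= (C * diam `^ (4 * d) * r `^ (- (b + c)))%:E)%E.
Proof.
move=> hm hl hd hdiam _ _ [z0 bz0] hb c c0.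
set bd := boundary rho eta.
have hdle : forall x y, rho x y <= diam.
  move=> x y; rewrite -lee_fin -hdiam; apply: ereal_sup_ubound.
  by exists (x, y).
have diam0 : 0 < diam.
  have : (margin rho eta z0 < 1%:E)%E by rewrite bz0 lte_fin ltr01.
  case/ereal_inf_lt => _ [x' nx' <-] _.
  apply: lt_le_trans (hdle z0 x'); rewrite lt_neqAle (@rho_ge0 _ _ _ hm) andbT.
  apply/eqP => h; apply: nx'; case: hm => _ h2 _ _.
  by have := (h2 z0 x').1 (esym h) => ->.
have [s0 [s00 [s01 hs0]]] := @box_cover _ _ _ _ _ _ hb c0.
have s02 : 0 < s0 / 2 < s0 by apply/andP; split; lra.
have [sq0 [hsq0 hcq0]] := hs0 _ s02.
set beta := b + c.
have sz1 : 1 <= (size sq0)%:R :> R.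
  have [z zin _] := hcq0 z0 bz0.
  by rewrite ler1n; case: (sq0) zin.
have beta0 : 0 < beta.
  rewrite ltNge; apply/negP => hb0.
  have a01 : 0 < s0 / 2 <= 1 by apply/andP; split; lra.
  have hnb : 0 <= - beta by lra.
  have := ger_powR a01 hnb; rewrite powRr0 => h.
  have := hsq0; rewrite -/beta; lra.
set M := (size sq0)%:R : R.
set A := 1 + M * diam `^ beta.
have M0 : 0 <= M by rewrite ler0n.
have A1 : 1 <= A by rewrite lerDl mulr_ge0 // powR_ge0.
have covP : forall s : R, exists sq : seq X, 0 < s <= diam ->
    (size sq)%:R <= A * s `^ (- beta) /\ bd `<=` \bigcup_(z in [set` sq]) oball rho z s.
  move=> s; case: (boolp.pselect (0 < s <= diam)); last by exists [::].
  move=> /andP[sp sd].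
  case: (ltrP s s0) => hss.
    have sps : 0 < s < s0 by rewrite sp hss.
    have [sq [h1 h2]] := hs0 s sps; exists sq => _; split => //.
    by apply: (le_trans (ltW h1)); rewrite ler_peMl // powR_ge0.
  exists sq0 => _; split.
    have hsb : s `^ beta <= diam `^ beta.
      by apply: (ge0_ler_powR (ltW beta0)) => //; rewrite nnegrE ltW.
    have hspos : 0 < s `^ beta by apply: powR_gt0.
    rewrite powRN /A mulrDl mul1r -mulrA.
    have : 1 <= diam `^ beta * (s `^ beta)^-1 by rewrite ler_pdivlMr // mul1r.
    have : 0 <= (s `^ beta)^-1 by rewrite invr_ge0 ltW.
    move=> h1 h2.
    have : M <= M * (diam `^ beta * (s `^ beta)^-1) by rewrite ler_peMr.
    lra.
  move=> y /hcq0 [z zin hz]; exists z => //.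
  by move: hz; rewrite /oball /=; lra.
have [cov hcov] := boolp.choice covP.
set B := (2 `^ d) ^+ 4.
have subP : forall p : X * R, exists sq : seq X, 0 < p.2 ->
    (size sq)%:R <= B /\
    oball rho p.1 p.2 `<=` \bigcup_(z in [set` sq]) oball rho z (p.2 / 2 ^+ 4).
  move=> [x s]; case: (boolp.pselect (0 < s)); last by exists [::].
  move=> sp; have [sq hsq] := @dbl_iter _ _ _ _ hd 4 x s sp.
  by exists sq.
have [sub hsub] := boolp.choice subP.
set q := 2 `^ (- beta) : R.
have q0 : 0 <= q by apply: powR_ge0.
have q1 : q < 1.
  rewrite /q /powR ifF; last by apply/eqP; lra.
  rewrite expR_lt1 mulNr oppr_lt0; apply: mulr_gt0 => //; apply: ln_gt0; lra.
have B0 : 0 < B by rewrite exprn_gt0 // powR_gt0.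
have D0 : 0 < diam `^ (4 * d) by apply: powR_gt0.
exists (B * A / (1 - q) / diam `^ (4 * d)); split.
  apply: divr_gt0 => //; apply: divr_gt0; last by lra.
  by apply: mulr_gt0 => //; lra.
move=> r r0.
have [K hK] : exists K : nat, diam < 2 ^+ K * r.
  have hdr : 0 <= diam / r by rewrite divr_ge0 // ltW.
  have := archi_boundP hdr; set n := Num.Def.archi_bound _ => hn.
  exists n; rewrite -ltr_pdivrMr //; apply: (lt_trans hn).
  by rewrite -natrX ltr_nat ltn_expl.
set ks := [seq k <- index_iota 0 K | 2 ^+ k * r <= diam].
set L := flatten [seq flatten [seq [seq (w, 2 ^+ k * r) | w <- sub (c, 3 * (2 ^+ k * r))]
           | c <- cov (2 ^+ k * r)] | k <- ks].
pose U i := @Uset _ _ rho _ eta (nth (point, 0) L i).1 (nth (point, 0) L i).2.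
apply: (@le_trans _ _ ((size L)%:R)%:E).
  apply: ereal_inf_lbound; exists (size L) => //; exists U; split.
    by move=> i _; apply: (@ml_U _ _ _ hm hl).
  move=> x hx.
  pose P k := forall z, bd z -> 2 ^+ k * r <= rho z x.
  have P0 : P 0%N.
    move=> z bz; rewrite expr0 mul1r leNgt; apply/negP => h; apply: hx.
    by exists z.
  have PK : ~ P K.
    by move=> h; have := h z0 bz0; have := hdle z0 x; lra.
  have [k [kK [Pk nPk]]] := @find_level P K P0 PK.
  set s := 2 ^+ k * r.
  have sp : 0 < s by rewrite mulr_gt0 // exprn_gt0.
  have sd : s <= diam by apply: le_trans (Pk z0 bz0) (hdle _ _).
  have [z [bz hz]] : exists z, bd z /\ rho z x < 2 * s.
    apply: boolp.contrapT => N; apply: nPk => z bz; rewrite leNgt; apply/negP => h.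
    by apply: N; exists z; split => //; move: h; rewrite exprS -mulrA.
  have spd : 0 < s <= diam by rewrite sp sd.
  have [_ hc] := hcov s spd.
  have [c' cin hcz] := hc z bz.
  have hcx : oball rho c' (3 * s) x.
    rewrite /oball /=; have := @rho_tri _ _ _ hm c' z x; move: hcz; rewrite /oball /=; lra.
  have s3 : 0 < (c', 3 * s).2 by rewrite /= mulr_gt0.
  have [_ hsb] := hsub _ s3.
  have [w win hw] := hsb x hcx.
  have pin : (w, s) \in L.
    apply/flattenP; exists (flatten [seq [seq (w0, s) | w0 <- sub (c0, 3 * s)] | c0 <- cov s]).
      apply/mapP; exists k => //; rewrite mem_filter sd mem_index_iota /=; exact: kK.
    apply/flattenP; exists [seq (w0, s) | w0 <- sub (c', 3 * s)].
      by apply/mapP; exists c'.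
    by apply/mapP; exists w.
  exists (index (w, s) L); first by rewrite /= index_mem.
  rewrite /U nth_index //=; split; last exact: Pk.
  by move: hw; rewrite /oball /=; lra.
rewrite lee_fin divfK; last by rewrite gt_eqF.
have e2 : forall k, (2 ^+ k : R) `^ (-beta) = q ^+ k.
  move=> k; rewrite -powR_mulrn ?ler0n // -powRrM (mulrC k%:R) powRrM.
  by rewrite powR_mulrn.
pose G k := B * A * r `^ (- beta) * q ^+ k.
have G0 : forall k, 0 <= G k.
  move=> k; rewrite /G !mulr_ge0 ?exprn_ge0 ?powR_ge0 //; lra.
apply: (@le_trans _ _ (\sum_(k <- ks) G k)).
  rewrite /L size_flatten_eq big_seq [X in _ <= X]big_seq; apply: ler_sum => k kin.
  have sd : 2 ^+ k * r <= diam by move: kin; rewrite mem_filter => /andP[].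
  have sp : 0 < 2 ^+ k * r by rewrite mulr_gt0 // exprn_gt0.
  have spd : 0 < 2 ^+ k * r <= diam by rewrite sp sd.
  have hf : forall c0, (size [seq (w, 2 ^+ k * r) | w <- sub (c0, 3 * (2 ^+ k * r))])%:R <= B.
    move=> c1; rewrite size_map.
    have hp : 0 < (c1, 3 * (2 ^+ k * r)).2 by rewrite /= mulr_gt0.
    exact: (hsub _ hp).1.
  apply: le_trans (@size_flatten_le _ _ _ _ (cov (2 ^+ k * r)) B hf) _.
  have h1 := (hcov _ spd).1.
  apply: le_trans (ler_wpM2r (ltW B0) h1) _.
  have h2k : 0 <= (2 ^+ k : R) by rewrite exprn_ge0.
  rewrite (powRM _ h2k (ltW r0)) e2 /G.
  suff -> : A * (q ^+ k * r `^ (- beta)) * B = B * A * r `^ (- beta) * q ^+ k by [].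
  ring.
rewrite /ks big_filter big_mkcond /=.
apply: (@le_trans _ _ (\sum_(0 <= k < K) G k)).
  by apply: ler_sum => k _; case: ifP => _ //.
rewrite big_mkord /G -mulr_sumr.
have hsum : \sum_(k < K) q ^+ k <= (1 - q)^-1.
  rewrite -[(1 - q)^-1]mul1r ler_pdivlMr; last by lra.
  have e := subrX1 q K.
  have qK : 0 <= q ^+ K by rewrite exprn_ge0.
  move: e; set S := \sum_(k < K) q ^+ k => e.
  nra.
have -> : B * A / (1 - q) * r `^ (- (b + c)) = B * A * r `^ (- beta) * (1 - q)^-1.
  by rewrite mulrAC.
apply: ler_wpM2l => //; rewrite !mulr_ge0 ?powR_ge0 //; lra.
Qed.
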